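(* For any lambda skeleton $p \in \mathrm{SLam}(i)$ and any distinct variable names $x_1,\dots,x_i$, there is a planar lambda term $p^\dagger$ with $[x_i,\dots,x_1]p^\dagger \in \Lambda_1^0(p)$.
   Context: Lambda skeletons: graded sets $\mathrm{SLam}(i)$, $i\in\mathbb{N}$, defined as the least sets such that $\_ \in \mathrm{SLam}(1)$; if $p\in\mathrm{SLam}(j)$ and $q\in\mathrm{SLam}(k)$ then $p(q)\in\mathrm{SLam}(j+k)$; if $p\in\mathrm{SLam}(i+1)$ then $\lambda\_.p\in\mathrm{SLam}(i)$. A pseudo lambda term is a skeleton in which every occurrence of $\_$ is replaced by a variable name. For a list of variable names $\Gamma$ and a pseudo term $t$, the judgment $[\Gamma]t\in\Lambda_1^0(p)$ (''$t$ is a planar lambda term with free variables $\Gamma$ decorating $p$'') is defined by the rules: $[x]x\in\Lambda_1^0(\_)$; if $[\Gamma]t\in\Lambda_1^0(p)$ and $[\Delta]u\in\Lambda_1^0(q)$ then $[\Gamma,\Delta]t(u)\in\Lambda_1^0(p(q))$; if $[x,\Gamma]t\in\Lambda_1^0(p)$ then $[\Gamma]\lambda x.t\in\Lambda_1^0(\lambda\_.p)$. *)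

(* Defs.v *)
From Stdlib Require Import List.
Import ListNotations.

Definition var := nat.

Inductive slam : nat -> Type :=
| SHole : slam 1
| SApp : forall j k, slam j -> slam k -> slam (j + k)
| SLam : forall i, slam (S i) -> slam i.

(* Pseudo lambda terms: skeletons whose holes carry variable names
   (binders also carry a name). *)
Inductive pterm : Type :=
| PVar : var -> pterm
| PApp : pterm -> pterm -> pterm
| PLam : var -> pterm -> pterm.

Inductive planar : list var -> pterm -> forall i, slam i -> Prop :=
| planar_var : forall x, planar [x] (PVar x) 1 SHole
| planar_app : forall G D t u j k (p : slam j) (q : slam k),
    planar G t j p -> planar D u k q ->
    planar (G ++ D) (PApp t u) (j + k) (SApp j k p q)
| planar_lam : forall x G t i (p : slam (S i)),
    planar (x :: G) t (S i) p -> planar G (PLam x t) i (SLam i p).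

(* Main.v *)
Require Import Defs.
From Stdlib Require Import List Lia.
Import ListNotations.

Lemma gen : forall i (p : slam i) (G : list var),
  length G = i -> exists t, planar G t i p.
Proof.
  induction p as [| j k p IHp q IHq | i p IHp]; intros G HG.
  - destruct G as [|x [|y G]]; simpl in HG; try discriminate.
    exists (PVar x). constructor.
  - destruct (IHp (firstn j G)) as [t Ht].
    { rewrite firstn_length; lia. }
    destruct (IHq (skipn j G)) as [u Hu].
    { rewrite skipn_length; lia. }
    exists (PApp t u). rewrite <- (firstn_skipn j G). constructor; auto.
  - destruct (IHp (0 :: G)) as [t Ht]. { simpl; lia. }
    exists (PLam 0 t). constructor; auto.
Qed.

(* xs = [x_1; ...; x_i]; the context [x_i, ..., x_1] is rev xs. *)
Theorem proposition2p5 :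
  forall (i : nat) (p : slam i) (xs : list var),
    length xs = i -> NoDup xs ->
    exists t : pterm, planar (rev xs) t i p.
Proof.
  intros i p xs H _. apply gen. rewrite length_rev; auto.
Qed.
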